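(* Let $P=\langle(\mathcal Q,\le),N\rangle$ be a possibilistic logic program. The collection Poss-ASP returned by the procedure $Poss\_Answer\_Sets(P)$ is the set of all possibilistic answer sets of $P$.
   Context: $(\mathcal Q,\le)$ is a finite lattice with top $\top_{\mathcal Q}$. A possibilistic (disjunctive) logic program is $P=\langle(\mathcal Q,\le),N\rangle$ with $N$ a finite set of clauses $r=\alpha:\mathcal A\leftarrow\mathcal B^+,not\ \mathcal B^-$ and constraints $\top_{\mathcal Q}:\ \leftarrow\mathcal B^+,not\ \mathcal B^-$; strongly negated atoms are fresh atoms; $n(r)=\alpha$, $P^*$ the set of underlying clauses; answer sets of $P^*$ in the Gelfond–Lifschitz sense (complementary atoms allowed). Reduct $P_S=\{n(r):(\mathcal A\cap S)\leftarrow\mathcal B^+\mid r\in N,\mathcal A\cap S\ne\emptyset,\mathcal B^-\cap S=\emptyset,\mathcal B^+\subseteq S\}$. A positive clause $\alpha:a_1\vee\dots\vee a_m\leftarrow b_1,\dots,b_k$ is turned into the possibilistic disjunction $(a_1\vee\dots\vee a_m\vee\sim b_1\vee\dots\vee\sim b_k\ \ \alpha)$. Rule (R): from $(c_1\ \alpha_1),(c_2\ \alpha_2)$ infer $(R(c_1,c_2)\ \mathrm{GLB}\{\alpha_1,\alpha_2\})$ with $R(c_1,c_2)$ a classical resolvent. Procedure $Poss\_Answer\_Sets(P)$: for each answer set $S$ of $P^*$, let $\mathcal C$ be the set of possibilistic disjunctions obtained from $P_S$; for each $a\in S$, search for a derivation by repeated application of (R) from $\mathcal C\cup\{(\sim a\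 \top_{\mathcal Q})\}$ of the empty clause with maximal value $\alpha$, and put $(a,\alpha)$ into $S'$; add $S'$ to Poss-ASP; return Poss-ASP. Possibilistic answer sets: let $\mathcal{PS}$ be the sets of pairs (atom, element of $\mathcal Q$) with each atom at most once, $M^*$ the atoms of $M$, $A\sqsubseteq B$ iff $A^*\subseteq B^*$ and $\gamma\le\delta$ whenever $(x,\gamma)\in A,(x,\delta)\in B$; $\vdash_{PL}$ is necessity-valued possibilistic-logic inference (clauses as weighted formulas, classical axioms weighted $\top_{\mathcal Q}$, rules $(\varphi\ \gamma),(\varphi\to\psi\ \delta)\vdash(\psi\ \mathrm{GLB}\{\gamma,\delta\})$ and $(\varphi\ \gamma),(\varphi\ \delta)\vdash(\varphi\ \epsilon)$ for $\epsilon\le\mathrm{GLB}\{\gamma,\delta\}$); $P\Vvdash_{PL}M$ iff $M^*$ is an answer set of $P^*$ and $P_{M^*}\vdash_{PL}(a\ \gamma)$ for all $(a,\gamma)\in M$; $M$ is a possibilistic answer set iff $M^*$ is an answer set of $P^*$, $P\Vvdash_{PL}M$ and no $M''\ne M$ in $\mathcal{PS}$ satisfies $M\sqsubseteq M''$ and $P\Vvdash_{PL}M''$. *)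

(* Defs.v *)
From HB Require Import structures.
From mathcomp Require Import all_boot all_order.
From Stdlib Require List.

Set Implicit Arguments.
Unset Strict Implicit.
Unset Printing Implicit Defensive.

Import Order.LTheory.
Local Open Scope order_scope.

(* A clause  alpha : A <- B+, not B-   (a constraint has A = set0). *)
Record pclause (T : finType) (Q : Type) := PClause {
  phead : {set T};
  ppos  : {set T};
  pneg  : {set T};
  pweight : Q
}.

Section PossProg.
Context {d : Order.disp_t} (Q : finTBLatticeType d) (T : finType).
Notation clause := (pclause T Q).

Definition wf_program (N : seq clause) : Prop :=
  forall r, List.In r N -> phead r = set0 -> pweight r = \top.

(* X is a model of the GL reduct of P* w.r.t. S *)
Definition gl_model (N : seq clause) (S X : {set T}) : Prop :=
  forall r, List.In r N -> pneg r :&: S = set0 -> ppos r \subset X ->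
    phead r :&: X != set0.

Definition answer_set (N : seq clause) (S : {set T}) : Prop :=
  gl_model N S S /\ forall X : {set T}, X \proper S -> ~ gl_model N S X.

Definition in_reduct (N : seq clause) (S : {set T}) (h p : {set T}) (a : Q)
  : Prop :=
  exists r, [/\ List.In r N, phead r :&: S != set0, pneg r :&: S = set0,
             ppos r \subset S &
             [/\ h = phead r :&: S, p = ppos r & a = pweight r]].

(* a classical clause: (positive literals, negated atoms) *)
Definition pdisj := ({set T} * {set T})%type.

Definition empty_clause : pdisj := (set0, set0).

Definition resolvent (c1 c2 c : pdisj) : Prop :=
  exists x,
    (x \in c1.1 /\ x \in c2.2 /\ c = ((c1.1 :\ x) :|: c2.1, c1.2 :|: (c2.2 :\ x)))
 \/ (x \in c2.1 /\ x \in c1.2 /\ c = ((c2.1 :\ x) :|: c1.1, c2.2 :|: (c1.2 :\ x))).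

Inductive res_deriv (C : pdisj -> Q -> Prop) : pdisj -> Q -> Prop :=
| rd_base c a : C c a -> res_deriv C c a
| rd_res c1 a1 c2 a2 c :
    res_deriv C c1 a1 -> res_deriv C c2 a2 -> resolvent c1 c2 c ->
    res_deriv C c (Order.meet a1 a2).

Definition reduct_disj (N : seq clause) (S : {set T}) (c : pdisj) (a : Q) : Prop :=
  exists h p, in_reduct N S h p a /\ c = (h, p).

Definition refut_base (N : seq clause) (S : {set T}) (x : T) (c : pdisj) (a : Q)
  : Prop :=
  reduct_disj N S c a \/ (c = (set0, [set x]) /\ a = \top).

Definition refutes (N : seq clause) (S : {set T}) (x : T) (a : Q) : Prop :=
  res_deriv (refut_base N S x) empty_clause a.

Definition pset := {ffun T -> option Q}.

Definition pstar (M : pset) : {set T} := [set x | M x != None].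

(* M is one possible output S' of Poss_Answer_Sets(P): for some answer set
   S of P*, every a in S is paired with a maximal value alpha of a
   refutation of C u {(~a \top)}, and no other atom occurs. *)
Definition procedure_output (N : seq clause) (M : pset) : Prop :=
  exists S, answer_set N S /\
    forall x,
      (x \notin S -> M x = None) /\
      (x \in S -> exists a, [/\ M x = Some a, refutes N S x a &
                   forall b, refutes N S x b -> a <= b -> b = a]).

Inductive form :=
| FVar of T | FTop | FBot | FNeg of form
| FAnd of form & form | FOr of form & form | FImp of form & form.

Fixpoint feval (v : T -> bool) (f : form) : bool :=
  match f with
  | FVar x => v x
  | FTop => true
  | FBot => false
  | FNeg g => ~~ feval v g
  | FAnd g h => feval v g && feval v h
  | FOr g h => feval v g || feval v h
  | FImp g h => feval v g ==> feval v h
  end.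

Definition tautology (f : form) : Prop := forall v, feval v f.

Definition big_and (s : seq T) : form := foldr (fun x f => FAnd (FVar x) f) FTop s.
Definition big_or (s : seq T) : form := foldr (fun x f => FOr (FVar x) f) FBot s.

Definition clause_formula (h p : {set T}) : form :=
  FImp (big_and (enum p)) (big_or (enum h)).

Inductive pl_deriv (B : form -> Q -> Prop) : form -> Q -> Prop :=
| pl_hyp f a : B f a -> pl_deriv B f a
| pl_ax f : tautology f -> pl_deriv B f \top
| pl_mp f g a b : pl_deriv B f a -> pl_deriv B (FImp f g) b ->
    pl_deriv B g (Order.meet a b)
| pl_weak f a b e : pl_deriv B f a -> pl_deriv B f b ->
    e <= Order.meet a b -> pl_deriv B f e.

Definition reduct_base (N : seq clause) (S : {set T}) (f : form) (a : Q) : Prop :=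
  exists h p, in_reduct N S h p a /\ f = clause_formula h p.

Definition pl_entails (N : seq clause) (M : pset) : Prop :=
  answer_set N (pstar M) /\
  forall x a, M x = Some a -> pl_deriv (reduct_base N (pstar M)) (FVar x) a.

Definition ps_le (M M'' : pset) : Prop :=
  pstar M \subset pstar M'' /\
  forall x g e, M x = Some g -> M'' x = Some e -> g <= e.

Definition poss_answer_set (N : seq clause) (M : pset) : Prop :=
  [/\ answer_set N (pstar M), pl_entails N M &
      ~ exists M'', [/\ M'' <> M, ps_le M M'' & pl_entails N M'']].

End PossProg.

(* Main.v *)
Require Import Defs.
From HB Require Import structures.
From mathcomp Require Import all_boot all_order.
From Stdlib Require Import Classical.
From Stdlib Require List.
Set Implicit Arguments.
Unset Strict Implicit.
Unset Printing Implicit Defensive.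
Import Order.LTheory.
Local Open Scope order_scope.

Definition sat (T : finType) (v : T -> bool) (c : pdisj T) : bool :=
  [forall z, (z \in c.2) ==> v z] ==> [exists z, (z \in c.1) && v z].

Lemma unsatP (T : finType) (v : T -> bool) (c : pdisj T) :
  ~~ sat v c <-> (forall z, z \in c.2 -> v z) /\ (forall z, z \in c.1 -> ~~ v z).
Proof.
rewrite /sat negb_imply; split.
- case/andP=> /forallP H1 /existsPn H2; split=> z Hz.
  + by have := H1 z; rewrite Hz.
  + by have := H2 z; rewrite Hz.
- case=> H1 H2; apply/andP; split.
  + by apply/forallP=> z; apply/implyP; apply: H1.
  + by apply/existsPn=> z; apply/negP=> /andP[/H2 /negP].
Qed.

Lemma satP (T : finType) (v : T -> bool) (c : pdisj T) :
  sat v c <-> ((forall z, z \in c.2 -> v z) -> exists2 z, z \in c.1 & v z).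
Proof.
rewrite /sat; split.
- move=> /implyP H Hall.
  have /existsP[z /andP[? ?]] : [exists z, (z \in c.1) && v z].
    by apply: H; apply/forallP=> z; apply/implyP; apply: Hall.
  by exists z.
- move=> H; apply/implyP=> /forallP H1.
  have [z ? ?] : exists2 z, z \in c.1 & v z.
    by apply: H=> z Hz; have := H1 z; rewrite Hz.
  by apply/existsP; exists z; apply/andP.
Qed.

Lemma feval_and (T : finType) (v : T -> bool) (s : seq T) :
  feval v (big_and s) = all v s.
Proof. by elim: s => //= x s ->. Qed.

Lemma feval_or (T : finType) (v : T -> bool) (s : seq T) :
  feval v (big_or s) = has v s.
Proof. by elim: s => //= x s ->. Qed.

Lemma feval_clause (T : finType) (v : T -> bool) (h p : {set T}) :
  feval v (clause_formula h p) = sat v (h, p).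
Proof.
rewrite /= feval_and feval_or.
apply/idP/idP.
- move=> /implyP H; apply/satP=> /= Hp.
  have /hasP[z] : has v (enum h).
    by apply: H; apply/allP=> z; rewrite mem_enum; apply: Hp.
  by rewrite mem_enum; exists z.
- move/satP=> /= H; apply/implyP=> /allP Ha.
  have [z Hz Hv] : exists2 z, z \in h & v z.
    by apply: H=> z Hz; apply: Ha; rewrite mem_enum.
  by apply/hasP; exists z; rewrite ?mem_enum.
Qed.

Definition ent d (Q : finTBLatticeType d) (T : finType) (N : seq (pclause T Q))
  (S : {set T}) (a : Q) (x : T) : Prop :=
  forall v : T -> bool,
    (forall h p w, in_reduct N S h p w -> a <= w -> sat v (h, p)) -> v x.

Lemma pl_sound d (Q : finTBLatticeType d) (T : finType) (N : seq (pclause T Q))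
  (S : {set T}) f a :
  pl_deriv (reduct_base N S) f a ->
  forall v : T -> bool,
    (forall h p w, in_reduct N S h p w -> a <= w -> sat v (h, p)) -> feval v f.
Proof.
elim=> {f a}.
- move=> f a [h [p [Hr ->]]] v Hv; rewrite feval_clause; exact: Hv Hr _.
- by move=> f Ht v _; apply: Ht.
- move=> f g a b _ IH1 _ IH2 v Hv /=.
  have H1 : feval v f.
    by apply: IH1=> h p w Hr Hw; apply: (Hv h p w Hr); exact: le_trans (leIl _ _) Hw.
  have H2 : feval v (FImp f g).
    by apply: IH2=> h p w Hr Hw; apply: (Hv h p w Hr); exact: le_trans (leIr _ _) Hw.
  by move: H2 => /= /implyP; apply.
- move=> f a b e _ IH1 _ _ He v Hv; apply: IH1=> h p w Hr Hw.
  apply: (Hv h p w Hr); exact: le_trans (le_trans He (leIl _ _)) Hw.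
Qed.

Definition cf d (Q : finTBLatticeType d) (T : finType) (S : {set T})
  (r : pclause T Q) : form T := clause_formula (phead r :&: S) (ppos r).

Lemma foldr_taut d (Q : finTBLatticeType d) (T : finType) (S : {set T})
  (v : T -> bool) (g : form T) (L : list (pclause T Q)) :
  ((forall r, List.In r L -> feval v (cf S r)) -> feval v g) ->
  feval v (foldr (fun r g => FImp (cf S r) g) g L).
Proof.
elim: L => [|r L IH] H /=; first by apply: H.
apply/implyP=> Hr; apply: IH=> HL; apply: H=> r' [<-|]; first by [].
exact: HL.
Qed.

Lemma foldr_deriv d (Q : finTBLatticeType d) (T : finType) (N : seq (pclause T Q))
  (S : {set T}) (a : Q) (g : form T) (L : list (pclause T Q)) :
  (forall r, List.In r L -> in_reduct N S (phead r :&: S) (ppos r) (pweight r)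
     /\ a <= pweight r) ->
  forall b, pl_deriv (reduct_base N S) (foldr (fun r g => FImp (cf S r) g) g L) b ->
  a <= b -> pl_deriv (reduct_base N S) g a.
Proof.
elim: L => [|r L IH] HL b Hd Hab /=.
- apply: (pl_weak Hd Hd); by rewrite meetxx.
- have [Hr Hw] := HL r (or_introl erefl).
  have Hc : pl_deriv (reduct_base N S) (cf S r) (pweight r).
    by apply: pl_hyp; exists (phead r :&: S), (ppos r).
  have Hc' : pl_deriv (reduct_base N S) (cf S r) a.
    by apply: (pl_weak Hc Hc); rewrite meetxx.
  have := pl_mp Hc' Hd; rewrite (meet_l Hab) => Hd'.
  apply: (IH _ a Hd') => //.
  by move=> r' Hr'; apply: HL; right.
Qed.

Lemma pl_complete d (Q : finTBLatticeType d) (T : finType) (N : seq (pclause T Q))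
  (S : {set T}) a x :
  ent N S a x -> pl_deriv (reduct_base N S) (FVar x) a.
Proof.
move=> He.
pose L := List.filter (fun r => [&& phead r :&: S != set0, pneg r :&: S == set0,
            ppos r \subset S & a <= pweight r]) N.
apply: (@foldr_deriv _ _ _ N S a (FVar x) L _ \top); last exact: lex1.
- move=> r /List.filter_In [Hin /and4P[H1 /eqP H2 H3 H4]]; split=> //.
  by exists r; split.
- apply: pl_ax=> v; apply: foldr_taut=> Hall; apply: He=> h p w [r [Hin H1 H2 H3 [-> -> ->]]] Hw.
  rewrite -feval_clause; apply: (Hall r); apply/List.filter_In; split=> //.
  by rewrite H1 H2 H3 Hw eqxx.
Qed.

Lemma resolvent_sound (T : finType) (v : T -> bool) (c1 c2 c : pdisj T) :
  sat v c1 -> sat v c2 -> resolvent c1 c2 c -> sat v c.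
Proof.
move=> H1 H2 [x [[Hx1 [Hx2 ->]]|[Hx1 [Hx2 ->]]]].
- apply/satP=> /= Hp.
  case Evx: (v x).
  + have Hp2 : forall z, z \in c2.2 -> v z.
      move=> z Hz; case: (z =P x) => [->//|/eqP nz]; apply: Hp.
      by rewrite !inE nz Hz /= orbT.
    have [z Hz Hv] := (satP _ _).1 H2 Hp2.
    by exists z; rewrite // !inE Hz orbT.
  + have Hp1 : forall z, z \in c1.2 -> v z.
      by move=> z Hz; apply: Hp; rewrite inE Hz.
    have [z Hz Hv] := (satP _ _).1 H1 Hp1.
    have nz : z != x by apply/eqP=> Ez; rewrite -Ez Hv in Evx.
    by exists z; rewrite // !inE nz Hz.
- apply/satP=> /= Hp.
  case Evx: (v x).
  + have Hp1 : forall z, z \in c1.2 -> v z.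
      move=> z Hz; case: (z =P x) => [->//|/eqP nz]; apply: Hp.
      by rewrite !inE nz Hz /= orbT.
    have [z Hz Hv] := (satP _ _).1 H1 Hp1.
    by exists z; rewrite // !inE Hz orbT.
  + have Hp2 : forall z, z \in c2.2 -> v z.
      by move=> z Hz; apply: Hp; rewrite inE Hz.
    have [z Hz Hv] := (satP _ _).1 H2 Hp2.
    have nz : z != x by apply/eqP=> Ez; rewrite -Ez Hv in Evx.
    by exists z; rewrite // !inE nz Hz.
Qed.

Lemma res_sound d (Q : finTBLatticeType d) (T : finType) (N : seq (pclause T Q))
  (S : {set T}) (x : T) c a :
  res_deriv (refut_base N S x) c a ->
  forall v : T -> bool,
    (forall h p w, in_reduct N S h p w -> a <= w -> sat v (h, p)) -> ~~ v x ->
    sat v c.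
Proof.
elim=> {c a}.
- move=> c a [[h [p [Hr ->]]]|[-> ->]] v Hv Hx; first exact: Hv Hr _.
  apply/satP=> /= H; have := H x; rewrite inE eqxx => /(_ isT) Hvx.
  by rewrite Hvx in Hx.
- move=> c1 a1 c2 a2 c _ IH1 _ IH2 Hres v Hv Hx.
  apply: (resolvent_sound _ _ Hres).
  + by apply: IH1 => // h p w Hr Hw; apply: (Hv h p w Hr); exact: le_trans (leIl _ _) Hw.
  + by apply: IH2 => // h p w Hr Hw; apply: (Hv h p w Hr); exact: le_trans (leIr _ _) Hw.
Qed.

Lemma refutes_ent d (Q : finTBLatticeType d) (T : finType) (N : seq (pclause T Q))
  (S : {set T}) (x : T) a : refutes N S x a -> ent N S a x.
Proof.
move=> Hr v Hv; case Evx: (v x) => //.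
have := res_sound Hr Hv; rewrite Evx => /(_ isT).
have -> : sat v (empty_clause T) = false.
  by apply/negbTE/unsatP; split=> z; rewrite inE.
by [].
Qed.

Lemma unsat_agree (T : finType) (v v' : T -> bool) (y : T) (c : pdisj T) :
  (forall z, z != y -> v' z = v z) -> y \notin c.1 -> y \notin c.2 ->
  ~~ sat v' c -> ~~ sat v c.
Proof.
move=> Hag H1 H2 /unsatP[Ha Hb]; apply/unsatP; split=> z Hz.
- have nz : z != y by apply/eqP=> Ez; rewrite -Ez Hz in H2.
  by rewrite -Hag // Ha.
- have nz : z != y by apply/eqP=> Ez; rewrite -Ez Hz in H1.
  by rewrite -Hag // Hb.
Qed.

Lemma sub_del (T : finType) (U A : {set T}) (y : T) :
  A \subset U -> y \notin A -> A \subset U :\ y.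
Proof.
move=> /subsetP HA Hy; apply/subsetP=> z Hz; rewrite !inE HA // andbT.
by apply/eqP=> Ez; rewrite -Ez Hz in Hy.
Qed.

Lemma res_complete d (Q : finTBLatticeType d) (T : finType) (N : seq (pclause T Q))
  (S : {set T}) (x : T) a :
  ent N S a x -> exists w, a <= w /\ refutes N S x w.
Proof.
move=> He.
pose Der c := exists w, a <= w /\ res_deriv (refut_base N S x) c w.
pose P (U : {set T}) := forall v : T -> bool, exists c,
  [/\ Der c, ~~ sat v c, c.1 \subset U & c.2 \subset U].
have P0 : P setT.
  move=> v; case Evx: (v x).
  - exists (set0, [set x]); split; rewrite ?subsetT //.
    + exists \top; split; first exact: lex1.
      by apply: rd_base; right.
    + by apply/unsatP; split=> z; rewrite inE // => /eqP ->.
  - have : ~ (forall h p w, in_reduct N S h p w -> a <= w -> sat v (h, p)).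
      by move=> H; have := He v H; rewrite Evx.
    move=> /not_all_ex_not[h] /not_all_ex_not[p] /not_all_ex_not[w] H.
    have [Hr Hw Hs] : [/\ in_reduct N S h p w, a <= w & ~~ sat v (h, p)].
      apply: NNPP=> Hn; apply: H=> Hr Hw; apply: NNPP=> Hs; apply: Hn; split=> //.
      exact/negP.
    exists (h, p); split; rewrite ?subsetT //.
    exists w; split=> //; apply: rd_base; left; exists h, p; split.
    + exact: Hr.
    + by [].
have Pstep : forall U y, P U -> P (U :\ y).
  move=> U y HP v.
  pose v0 := fun z => if z == y then false else v z.
  pose v1 := fun z => if z == y then true else v z.
  have ag0 : forall z, z != y -> v0 z = v z by move=> z nz; rewrite /v0 (negbTE nz).
  have ag1 : forall z, z != y -> v1 z = v z by move=> z nz; rewrite /v1 (negbTE nz).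
  have [c0 [D0 F0 S01 S02]] := HP v0.
  have [c1 [D1 F1 S11 S12]] := HP v1.
  case: (boolP ((y \in c0.1) || (y \in c0.2))) => [Hy0|].
  - case: (boolP ((y \in c1.1) || (y \in c1.2))) => [Hy1|].
    + have /unsatP[F0a F0b] := F0; have /unsatP[F1a F1b] := F1.
      have n02 : y \notin c0.2.
        by apply/negP=> /F0a; rewrite /v0 eqxx.
      have n11 : y \notin c1.1.
        by apply/negP=> /F1b; rewrite /v1 eqxx.
      have y01 : y \in c0.1 by move: Hy0; rewrite (negbTE n02) orbF.
      have y12 : y \in c1.2 by move: Hy1; rewrite (negbTE n11).
      exists ((c0.1 :\ y) :|: c1.1, c0.2 :|: (c1.2 :\ y)); split.
      * have [w0 [Hw0 Dw0]] := D0; have [w1 [Hw1 Dw1]] := D1.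
        exists (Order.meet w0 w1); split; first by rewrite lexI Hw0 Hw1.
        apply: (rd_res Dw0 Dw1); exists y; left; split=> //.
      * apply/unsatP; split=> z /=; rewrite !inE.
        -- case/orP=> [Hz|/andP[nz Hz]].
           ++ have nz : z != y by apply/eqP=> Ez; rewrite -Ez Hz in n02.
              by rewrite -ag0 // F0a.
           ++ by rewrite -ag1 // F1a.
        -- case/orP=> [/andP[nz Hz]|Hz].
           ++ by rewrite -(ag0 _ nz) F0b.
           ++ have nz : z != y by apply/eqP=> Ez; rewrite -Ez Hz in n11.
              by rewrite -ag1 // F1b.
      * apply/subsetP=> z; rewrite !inE => /orP[/andP[-> /(subsetP S01) ->]//|Hz].
        have nz : z != y by apply/eqP=> Ez; rewrite -Ez Hz in n11.
        by rewrite nz (subsetP S11).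
      * apply/subsetP=> z; rewrite !inE => /orP[Hz|/andP[-> /(subsetP S12) ->]//].
        have nz : z != y by apply/eqP=> Ez; rewrite -Ez Hz in n02.
        by rewrite nz (subsetP S02).
    + rewrite negb_or => /andP[n1 n2].
      exists c1; split=> //; [exact: unsat_agree ag1 n1 n2 F1|exact: sub_del|exact: sub_del].
  - rewrite negb_or => /andP[n1 n2].
    exists c0; split=> //; [exact: unsat_agree ag0 n1 n2 F0|exact: sub_del|exact: sub_del].
have Ps : forall s : seq T, P (~: [set z | z \in s]).
  elim=> [|y s IH].
  - have -> : ~: [set z | z \in [::]] = [set: T] :> {set T}.
      by apply/setP=> z; rewrite !inE.
    exact: P0.
  - have -> : ~: [set z | z \in y :: s] = (~: [set z | z \in s]) :\ y.
      by apply/setP=> z; rewrite !inE negb_or andbC.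
    exact: Pstep.
have [[c1 c2] [[w [Hw Dw]] _ Sc1 Sc2]] := Ps (enum T) (fun _ => true).
have E : forall A : {set T}, A \subset ~: [set z | z \in enum T] -> A = set0.
  move=> A /subsetP HA; apply/setP=> z; rewrite inE; apply/negP=> /HA.
  by rewrite !inE mem_enum.
exists w; split=> //; move: Dw; rewrite /= in Sc1 Sc2.
by rewrite (E _ Sc1) (E _ Sc2).
Qed.

Lemma antichain d (Q : finTBLatticeType d) (T : finType) (N : seq (pclause T Q))
  (S1 S2 : {set T}) :
  answer_set N S1 -> answer_set N S2 -> S1 \subset S2 -> S1 = S2.
Proof.
move=> [G1 _] [_ Min2] Hs.
case: (boolP (S1 \proper S2)) => [Hp|].
- exfalso; apply: (Min2 _ Hp)=> r Hr Hn Hpos; apply: G1 => //.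
  apply/eqP; rewrite -subset0; apply: subset_trans (setIS _ Hs) _.
  by rewrite Hn.
- by rewrite properE Hs /= negbK => Hs'; apply/eqP; rewrite eqEsubset Hs Hs'.
Qed.

Lemma ent_pl d (Q : finTBLatticeType d) (T : finType) (N : seq (pclause T Q))
  (S : {set T}) a x :
  pl_deriv (reduct_base N S) (FVar x) a <-> ent N S a x.
Proof.
split; [move=> H v Hv; exact: (pl_sound H Hv) | exact: pl_complete].
Qed.

Theorem proposition8 (d : Order.disp_t) (Q : finTBLatticeType d) (T : finType)
  (N : seq (pclause T Q)) :
  wf_program N ->
  forall M : pset Q T, procedure_output N M <-> poss_answer_set N M.
Proof.
move=> _ M; split.
- move=> [S [HS HM]].
  have EpS : pstar M = S.
    apply/setP=> z; rewrite inE; case: (boolP (z \in S)) => Hz.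
    + by have [_ /(_ Hz) [a [-> _ _]]] := HM z.
    + by have [/(_ Hz) -> _] := HM z.
  have Hent : pl_entails N M.
    split; first by rewrite EpS.
    move=> z a Ha; apply/ent_pl; rewrite EpS.
    have Hz : z \in S by rewrite -EpS inE Ha.
    have [_ /(_ Hz) [a' [Ha' Hr _]]] := HM z.
    by move: Ha; rewrite Ha' => -[<-]; apply: refutes_ent.
  split; [by rewrite EpS | exact: Hent |].
  move=> [M'' [Hne [Hsub Hle] [HA'' HP'']]].
  have EpS'' : pstar M'' = S.
    rewrite -EpS; symmetry; apply: (antichain (N:=N)) => //; by rewrite ?EpS.
  apply: Hne; apply/ffunP=> z.
  case EMz: (M z) => [a|].
  + have Hz : z \in S by rewrite -EpS inE EMz.
    have := Hz; rewrite -EpS'' inE; case EM'': (M'' z) => [e|] // _.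
    have Hae := Hle _ _ _ EMz EM''.
    have := HP'' _ _ EM''; rewrite ent_pl EpS'' => He.
    have [w [Hew Hrw]] := res_complete He.
    have [_ /(_ Hz) [a' [Ha' _ Hmax]]] := HM z.
    move: Ha'; rewrite EMz => -[Eaa]; subst a'.
    have Ew := Hmax w Hrw (le_trans Hae Hew).
    rewrite Ew in Hew; congr Some; apply: le_anti; by rewrite Hae Hew.
  + have : z \notin S by rewrite -EpS inE EMz.
    by rewrite -EpS'' inE negbK => /eqP.
- move=> [HA [_ HP] Hmax].
  pose S := pstar M.
  have Hmx : forall z a b, M z = Some a -> ent N S b z -> a <= b -> b = a.
    move=> z a b Ha Hb Hab.
    pose M'' : pset Q T := [ffun u => if u == z then Some b else M u].
    have EpS : pstar M'' = S.
      apply/setP=> u; rewrite !inE ffunE; case: (u =P z) => [->|//].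
      by rewrite Ha.
    case: (eqVneq M'' M) => [EM|NE].
    + by move: (congr1 (fun f : pset Q T => f z) EM); rewrite /= ffunE eqxx Ha => -[].
    + exfalso; apply: Hmax; exists M''; split.
      * by apply/eqP.
      * split; first by rewrite EpS.
        move=> u g e; rewrite ffunE; case: (u =P z) => [->|_].
        -- by rewrite Ha => -[<-] [<-].
        -- by move=> -> [<-].
      * split; first by rewrite EpS.
        move=> u e; rewrite ffunE EpS; case: (u =P z) => [->|_].
        -- by move=> [<-]; apply/ent_pl.
        -- by move=> Hu; apply: HP.
  exists S; split=> //.
  move=> z; split.
  + by rewrite inE negbK => /eqP.
  + rewrite inE; case EMz: (M z) => [a|] // _.
    have Ha : ent N S a z by apply/ent_pl; apply: HP.
    have [w [Haw Hrw]] := res_complete Ha.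
    have Ew := Hmx _ _ _ EMz (refutes_ent Hrw) Haw.
    exists a; split=> //; first by rewrite -Ew.
    move=> b Hrb Hab; exact: Hmx _ _ _ EMz (refutes_ent Hrb) Hab.
Qed.
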